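(* Suppose all agents are single-minded, agent $i$ having value $v_i>0$ for any set containing $S_i\subseteq M$ (and $0$ otherwise). Consider the following algorithm (SingleMinded MC-CWE). Phase 1: let $Q=\{i:|S_i|\le\sqrt{m}\}$; process agents of $Q$ in decreasing order of $v_i$, assigning $x_i=S_i$ to agent $i$ if $S_i$ is disjoint from all sets assigned so far (all other agents get $x_i=\emptyset$); then add each item not yet allocated to an arbitrary nonempty bundle $x_j$. Phase 2: for each $i\notin Q$ in decreasing order of $v_i$, let $C_i=\{j: x_j\cap S_i\neq\emptyset\}$; if $v_i>\sum_{j\in C_i}v_j$ then set $x_i\leftarrow\bigcup_{j\in C_i}x_j$ and $x_j\leftarrow\emptyset$ for each $j\in C_i$. Return $x$. Then the returned allocation is an MC-CWE allocation whose social welfare is within a factor $O(\sqrt{m})$ of the optimal social welfare over all allocations, and the algorithm can be implemented with a polynomial number of value queries.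
   Context: $M$ is a finite set of $m$ indivisible items and $[n]$ a set of agents. An allocation is a tuple $(x_0,\dots,x_n)$ of pairwise disjoint sets with union $M$ ($x_0$ unallocated); social welfare is $\sum_i v_i(x_i)$ where for single-minded agent $i$, $v_i(T)=v_i$ if $S_i\subseteq T$ and $0$ otherwise. An allocation is MC-CWE if there are prices $p_k\ge0$ for each nonempty bundle $x_k$ such that (i) for every agent $i$ and every set $T$ of indices of nonempty bundles, $u_i\ge v_i(\bigcup_{k\in T}x_k)-\sum_{k\in T}p_k$, where $u_i=v_i(x_i)-p_i$ if $x_i\neq\emptyset$ and $0$ otherwise; and (ii) $p_0=0$ if $x_0\ne\emptyset$. A value query asks agent $i$ for $v_i(S)$ for a given $S$. *)

(* Defs.v *)
From HB Require Import structures.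
From mathcomp Require Import all_boot all_order all_algebra.
From mathcomp Require Import reals.
Set Implicit Arguments. Unset Strict Implicit. Unset Printing Implicit Defensive.
Import Order.TTheory GRing.Theory Num.Theory.
Local Open Scope ring_scope.

Section SingleMinded.
Variables (R : realType) (n m : nat).

(* Bundles are indexed by option 'I_n : None is the unallocated bundle x_0,
   Some i is the bundle x_i of agent i.  Items are 'I_m. *)
Definition alloc := {ffun option 'I_n -> {set 'I_m}}.

Definition is_alloc (x : alloc) : Prop :=
  (forall k k' : option 'I_n, k != k' -> [disjoint x k & x k']) /\
  \bigcup_(k : option 'I_n) x k = [set: 'I_m].

Variables (S : 'I_n -> {set 'I_m}) (v : 'I_n -> R).

Definition sm_val (i : 'I_n) (T : {set 'I_m}) : R := if S i \subset T then v i else 0.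

Definition SW (x : alloc) : R := \sum_(i : 'I_n) sm_val i (x (Some i)).

Definition utility (x : alloc) (p : option 'I_n -> R) (i : 'I_n) : R :=
  if x (Some i) != set0 then sm_val i (x (Some i)) - p (Some i) else 0.

Definition is_MC_CWE (x : alloc) : Prop :=
  is_alloc x /\
  exists p : option 'I_n -> R,
    (forall k, x k != set0 -> 0 <= p k) /\
    (forall (i : 'I_n) (T : {set option 'I_n}),
        T \subset [set k | x k != set0] ->
        sm_val i (\bigcup_(k in T) x k) - \sum_(k in T) p k <= utility x p i) /\
    (x None != set0 -> p None = 0).

Definition Qset : {set 'I_n} := [set i | (#|S i|%:R <= Num.sqrt (m%:R : R))].

Definition dec_order (A : {set 'I_n}) (s : seq 'I_n) : Prop :=
  perm_eq s (enum A) /\ sorted (fun a b => v b <= v a) s.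

(* greedy step of phase 1; state = (items allocated so far, agents' bundles) *)
Definition greedy_step (st : {set 'I_m} * {ffun 'I_n -> {set 'I_m}}) (i : 'I_n) :=
  if [disjoint S i & st.1]
  then (st.1 :|: S i, finfun (fun j => if j == i then S i else st.2 j))
  else st.

Definition greedy (s : seq 'I_n) := foldl greedy_step (set0, [ffun _ => set0]) s.

(* Phase 1 output: greedy allocation, then every unallocated item is added to an
   arbitrary nonempty agent bundle (chosen by f); if no agent bundle is nonempty
   the items remain in x_0. *)
Definition phase1 (x : alloc) : Prop :=
  exists s : seq 'I_n, dec_order Qset s /\
  let A := (greedy s).1 in let g := (greedy s).2 in
  if [exists j, g j != set0] then
    exists f : 'I_m -> 'I_n,
      (forall k, k \notin A -> g (f k) != set0) /\
      x None = set0 /\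
      (forall j, x (Some j) = g j :|: [set k | (k \notin A) && (f k == j)])
  else x None = ~: A /\ (forall j, x (Some j) = g j).

Definition wv (k : option 'I_n) : R := if k is Some j then v j else 0.

Definition phase2_step (x : alloc) (i : 'I_n) : alloc :=
  let C := [set k | x k :&: S i != set0] in
  if \sum_(k in C) wv k < v i then
    finfun (fun k => if k == Some i then \bigcup_(k' in C) x k'
                     else if k \in C then set0 else x k)
  else x.

Definition SM_run (x : alloc) : Prop :=
  exists x1 : alloc, phase1 x1 /\
  exists s : seq 'I_n, dec_order (~: Qset) s /\ x = foldl phase2_step x1 s.

End SingleMinded.

Inductive qprog (n m : nat) (R A : Type) : Type :=
| QRet : A -> qprog n m R A
| QAsk : 'I_n -> {set 'I_m} -> (R -> qprog n m R A) -> qprog n m R A.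

Arguments QRet {n m R A}.
Arguments QAsk {n m R A}.

Fixpoint qrun n m R A (o : 'I_n -> {set 'I_m} -> R) (P : qprog n m R A) : A * nat :=
  match P with
  | QRet a => (a, 0%N)
  | QAsk i T k => let r := qrun o (k (o i T)) in (r.1, r.2.+1)
  end.

(* Main.v *)
Require Import Defs.
From HB Require Import structures.
From mathcomp Require Import all_boot all_order all_algebra.
From mathcomp Require Import reals.
From Stdlib Require Import FunctionalExtensionality.
Import Order.TTheory GRing.Theory Num.Theory.
Local Open Scope ring_scope.
Set Implicit Arguments. Unset Strict Implicit. Unset Printing Implicit Defensive.

Lemma sum_option (R : realType) (I : finType) (F : option I -> R) :
  \sum_k F k = F None + \sum_i F (Some i).
Proof.
rewrite (bigD1 None) //=; congr (_ + _).
rewrite (eq_bigl (mem [set Some i | i in [set: I]])); last first.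
  move=> k /=; apply/idP/idP.
    by case: k => [i|] //= _; apply/imsetP; exists i.
  by case/imsetP => i _ ->.
rewrite big_imset /=; last by move=> i j _ _ [].
by apply: eq_bigl => i; rewrite inE.
Qed.

Lemma sum_sub (R : realType) (T : finType) (A B : {set T}) (F : T -> R) :
  A \subset B -> (forall k, 0 <= F k) -> \sum_(k in A) F k <= \sum_(k in B) F k.
Proof.
move=> hAB hF; rewrite [X in X <= _]big_mkcond [X in _ <= X]big_mkcond /=.
apply: ler_sum => k _; case: ifP => hk; first by rewrite (subsetP hAB _ hk).
by case: ifP.
Qed.

Lemma disjP (T : finType) (A B : {set T}) :
  (forall t, t \in A -> t \in B -> False) -> [disjoint A & B].
Proof.
move=> h; rewrite -setI_eq0; apply/eqP/setP => t; rewrite !inE.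
by apply/negbTE/negP => /andP [a b]; exact: h a b.
Qed.

Section P2.
Variables (R : realType) (n m : nat) (S : 'I_n -> {set 'I_m}) (v : 'I_n -> R).
Hypothesis hv : forall i, 0 < v i.
Hypothesis hS : forall i, S i != set0.

Lemma wv_ge0 k : 0 <= wv v k.
Proof. by case: k => [j|] //=; exact: ltW. Qed.

Definition own (x : alloc n m) :=
  (forall t k k', t \in x k -> t \in x k' -> k = k') /\ (forall t, exists k, t \in x k).

Lemma allocP x : is_alloc x <-> own x.
Proof.
split.
- move=> [hd hc]; split.
  + move=> t k k' h1 h2; apply/eqP; apply: contraT => hne.
    by move: (disjointFr (hd _ _ hne) h1); rewrite h2.
  + move=> t; have : t \in [set: 'I_m] by rewrite inE.
    by rewrite -hc => /bigcupP [k _ hk]; exists k.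
- move=> [hu hc]; split.
  + move=> k k' hne; apply/disjP => t h1 h2.
    by move: hne; rewrite (hu _ _ _ h1 h2) eqxx.
  + apply/setP => t; rewrite inE; case: (hc t) => k hk; apply/bigcupP; by exists k.
Qed.

Definition good (x : alloc n m) := forall j, x (Some j) != set0 -> S j \subset x (Some j).

Definition cov (x : alloc n m) (T : {set 'I_m}) : R :=
  \sum_(k in [set k | x k :&: T != set0]) wv v k.

Lemma meetP (A B : {set 'I_m}) : reflect (exists t, t \in A /\ t \in B) (A :&: B != set0).
Proof.
apply: (iffP (set0Pn _)) => [[t]|[t [a b]]]; last by exists t; rewrite inE a b.
by rewrite inE => /andP [a b]; exists t.
Qed.

Lemma step_inv x i : own x -> good x ->
  let x' := phase2_step S v x i in
  own x' /\ good x' /\ (forall T, cov x T <= cov x' T) /\ v i <= cov x' (S i).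
Proof.
move=> [hu hc] hg /=; rewrite /phase2_step.
set C := [set k | x k :&: S i != set0].
case: ltP => hwin; last first.
  split; first by []. split; first by []. split; first by [].
  by [].
set U := \bigcup_(k' in C) x k'.
set x' := finfun _.
have x'E k : x' k = if k == Some i then U else if k \in C then set0 else x k by rewrite ffunE.
have K : x (Some i) = set0 \/ Some i \in C.
  case: (eqVneq (x (Some i)) set0) => h; [by left | right].
  have /set0Pn [t ht] := hS i.
  by rewrite inE; apply/meetP; exists t; split => //; apply: (subsetP (hg _ h)).
have KK k t : k \notin C -> t \in x k -> k != Some i.
  move=> hk ht; apply/eqP => ek; subst k; case: K => [e|]; last by rewrite (negbTE hk).
  by rewrite e inE in ht.
have memx' t k : t \in x' k -> exists k0, t \in x k0 /\
     ((k = Some i /\ k0 \in C) \/ (k = k0 /\ k0 \notin C)).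
  rewrite x'E; case: eqP => [->|_].
    by move=> /bigcupP [k0 hk0 ht]; exists k0; split => //; left.
  case: ifP => hk; first by rewrite inE.
  by move=> ht; exists k; split => //; right; rewrite hk.
have inU t k : k \in C -> t \in x k -> t \in U by move=> hk ht; apply/bigcupP; exists k.
have x'_nC k : k \notin C -> k != Some i -> x' k = x k.
  by move=> h1 h2; rewrite x'E (negbTE h2) (negbTE h1).
have own' : own x'.
  split.
  - move=> t k k' /memx' [k0 [h0 c0]] /memx' [k1 [h1 c1]].
    have e := hu _ _ _ h0 h1; subst k1.
    case: c0 => [[e1 a]|[e1 a]]; case: c1 => [[e2 b]|[e2 b]]; try by rewrite e1 e2.
    + by rewrite a in b.
    + by rewrite b in a.
  - move=> t; case: (hc t) => k0 hk0.
    case: (boolP (k0 \in C)) => hC.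
      by exists (Some i); rewrite x'E eqxx; exact: inU hC hk0.
    by exists k0; rewrite x'_nC //; exact: KK hC hk0.
split; first exact: own'.
split.
  move=> j; rewrite x'E; case: (eqVneq j i) => [-> _|hne]; first rewrite eqxx.
    apply/subsetP => t ht; case: (hc t) => k0 hk0; apply: (inU _ k0) => //.
    by rewrite inE; apply/meetP; exists t.
  have -> : (Some j == Some i) = false by apply/negbTE; apply: contra hne => /eqP [->].
  case: ifP => hk; first by rewrite eqxx.
  by apply: hg.
have iB' T : U :&: T != set0 -> Some i \in [set k | x' k :&: T != set0].
  by rewrite inE x'E eqxx.
split.
  move=> T; rewrite /cov.
  set B := [set k | x k :&: T != set0]; set B' := [set k | x' k :&: T != set0].
  have BC k : k \in B -> k \notin C -> k \in B'.
    move=> hk hC; move: (hk); rewrite !inE => /meetP [t [ht1 ht2]].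
    by rewrite x'_nC //; [apply/meetP; exists t | exact: KK hC ht1].
  case: (boolP [exists k, (k \in B) && (k \in C)]) => hBC; last first.
    apply: sum_sub; last exact: wv_ge0.
    apply/subsetP => k hk; apply: BC => //; apply: contra hBC => hC.
    by apply/existsP; exists k; rewrite hk hC.
  case/existsP: hBC => k0 /andP [hk0B hk0C].
  rewrite (big_setID C).
  have h1 : \sum_(k in B :&: C) wv v k <= \sum_(k in C) wv v k.
    by apply: sum_sub; [exact: subsetIr | exact: wv_ge0].
  have iBC : Some i \notin B :\: C.
    rewrite in_setD negb_and negbK; case: K => [e|->]; last by [].
    by rewrite /B inE e set0I eqxx orbT.
  have h2 : wv v (Some i) + \sum_(k in B :\: C) wv v k <= \sum_(k in B') wv v k.
    rewrite -big_setU1 //=; apply: sum_sub; last exact: wv_ge0.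
    apply/subsetP => k; rewrite in_setU1 in_setD => /orP [/eqP ->|/andP [hC hB]].
      move: hk0B; rewrite inE => /meetP [t [ht1 ht2]].
      by apply: iB'; apply/meetP; exists t; split => //; exact: inU hk0C ht1.
    by apply: BC.
  apply: le_trans h2; rewrite lerD2r /=; apply: le_trans h1 _; exact: ltW.
rewrite /cov (bigD1 (Some i)) /=; last first.
  rewrite inE x'E eqxx; have /set0Pn [t ht] := hS i; apply/meetP; exists t; split => //.
  case: (hc t) => k0 hk0; apply: (inU _ k0) => //.
  by rewrite inE; apply/meetP; exists t.
rewrite lerDl; apply: sumr_ge0 => k _; exact: wv_ge0.
Qed.

Definition ginv (st : {set 'I_m} * {ffun 'I_n -> {set 'I_m}}) (P : pred 'I_n) :=
  [/\ (forall j, st.2 j = set0 \/ st.2 j = S j),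
      (forall j j', j != j' -> [disjoint st.2 j & st.2 j']),
      st.1 = \bigcup_j st.2 j,
      (forall j, st.2 j != set0 -> P j) &
      (forall i, P i -> exists j, st.2 j != set0 /\ v i <= v j /\ S j :&: S i != set0)].

Lemma ginv_ext st P P' : ginv st P -> P =1 P' -> ginv st P'.
Proof.
move=> [h1 h2 h3 h4 h5] e; split => //.
- by move=> j /h4; rewrite e.
- by move=> i; rewrite -e; apply: h5.
Qed.

Lemma greedy_inv r : forall P st, ginv st P ->
  (forall j, st.2 j != set0 -> all (fun i => v i <= v j) r) ->
  sorted (fun a b => v b <= v a) r ->
  ginv (foldl (greedy_step S) st r) (fun j => P j || (j \in r)).
Proof.
elim: r => [|i r IH] P [A g] hinv hord hs /=.
  by apply: (ginv_ext hinv) => j; rewrite orbF.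
have hpath : all (fun b => v b <= v i) r.
  apply: (order_path_min (leT := fun a b => v b <= v a)) => //.
  by move=> a b c h1 h2; apply: le_trans h2 h1.
have hs' : sorted (fun a b => v b <= v a) r by move: hs => /= /path_sorted.
case: hinv => /= h1 h2 h3 h4 h5.
have gA j : g j \subset A by rewrite h3; apply/subsetP => t ht; apply/bigcupP; exists j.
rewrite /greedy_step /=; case: ifP => hdisj.
  set g' := finfun _.
  have g'E j : g' j = if j == i then S i else g j by rewrite ffunE.
  have hg' j : g j != set0 -> g' j != set0.
    by rewrite g'E; case: (eqVneq j i) => // _ _; exact: hS.
  have := IH (fun j => (j == i) || P j) (A :|: S i, g').
  move=> /(_ _ _ hs') H; apply: ginv_ext; first apply: H.
  - split => /=.
    + by move=> j; rewrite g'E; case: (eqVneq j i) => [->|_]; [right | exact: h1].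
    + move=> j j' hne; rewrite !g'E.
      case: (eqVneq j i) => [ej|nj]; case: (eqVneq j' i) => [ej'|nj'].
      * by rewrite ej ej' eqxx in hne.
      * exact: disjointWr (gA j') hdisj.
      * by apply: disjointWl (gA j) _; rewrite disjoint_sym hdisj.
      * exact: h2.
    + apply/setP => t; rewrite in_setU h3; apply/idP/idP.
        case/orP => [/bigcupP [j _ ht]|ht].
          case: (eqVneq j i) => [ej|nj].
            by apply/bigcupP; exists i => //; rewrite g'E eqxx; case: (h1 j) ht => ->; [rewrite inE | rewrite ej].
          by apply/bigcupP; exists j => //; rewrite g'E (negbTE nj).
        by apply/bigcupP; exists i => //; rewrite g'E eqxx.
      case/bigcupP => j _; rewrite g'E; case: (eqVneq j i) => _ ht; last first.
        by apply/orP; left; apply/bigcupP; exists j.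
      by rewrite ht orbT.
    + move=> j; rewrite g'E; case: (eqVneq j i) => [->|_ /h4 ->]; by rewrite ?eqxx ?orbT.
    + move=> k /orP [/eqP ->|/h5 [j [hj [hv' hm]]]].
        exists i; rewrite g'E eqxx setIid; split; [exact: hS | split => //; exact: hS].
      by exists j; split => //; apply: hg'.
  - move=> j; rewrite g'E; case: (eqVneq j i) => [-> _|_ /hord /= /andP [] //]; exact: hpath.
  - by move=> j /=; rewrite in_cons; case: (j == i); case: (P j).
have := IH (fun j => (j == i) || P j) (A, g).
move=> /(_ _ _ hs') H; apply: ginv_ext; first apply: H.
- split => //.
  + by move=> j /h4 ->; rewrite orbT.
  + move=> k /orP [/eqP ->|/h5 //].
    have /set0Pn [t] : S i :&: A != set0 by rewrite setI_eq0 hdisj.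
    rewrite inE => /andP [ht1 ht2].
    move: ht2; rewrite h3 => /bigcupP [j _ htj].
    have hj : g j != set0 by apply/set0Pn; exists t.
    exists j; split => //; split.
      by move: (hord j hj) => /= /andP [].
    apply/set0Pn; exists t; rewrite inE ht1 andbT.
    by case: (h1 j) htj => ->; rewrite ?inE.
- by move=> j /hord /= /andP [].
- by move=> j /=; rewrite in_cons; case: (j == i); case: (P j).
Qed.
Lemma fold_inv s : forall (D : {set 'I_n}) x, own x -> good x ->
  (forall i, i \in D -> v i <= cov x (S i)) ->
  let x' := foldl (phase2_step S v) x s in
  own x' /\ good x' /\ (forall i, (i \in D) || (i \in s) -> v i <= cov x' (S i)) /\
  cov x setT <= cov x' setT.
Proof.
elim: s => [|j s IH] D x ho hg hD /=.
  split => //; split => //; split; last by [].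
  by move=> i; rewrite orbF; apply: hD.
have [ho1 [hg1 [hc1 hj1]]] := step_inv j ho hg.
have := IH (j |: D) _ ho1 hg1.
case.
  move=> i; rewrite in_setU1 => /orP [/eqP ->|hi] //.
  exact: le_trans (hD _ hi) (hc1 _).
move=> ho2 [hg2 [hc2 hT2]]; split => //; split => //; split.
  move=> i hi; apply: hc2; move: hi; rewrite in_setU1 in_cons.
  by case: (i == j); case: (i \in D); case: (i \in s).
exact: le_trans (hc1 setT) hT2.
Qed.

Lemma SW_cov x : own x -> good x -> SW S v x = cov x setT.
Proof.
move=> ho hg; rewrite /SW /cov [RHS]big_mkcond /= sum_option /= inE.
rewrite (_ : (if _ then 0 else 0) = 0); last by case: ifP.
rewrite add0r; apply: eq_bigr => i _; rewrite inE setIT /sm_val.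
case: (eqVneq (x (Some i)) set0) => [e|ne].
  by rewrite e subset0 (negbTE (hS i)).
by rewrite (hg _ ne).
Qed.

Lemma cov_ge (x : alloc n m) T k : x k :&: T != set0 -> wv v k <= cov x T.
Proof.
move=> h; rewrite /cov (bigD1 k) ?inE //= lerDl; apply: sumr_ge0 => k' _; exact: wv_ge0.
Qed.

Lemma cov_le (x : alloc n m) T : cov x T <= cov x setT.
Proof.
apply: sum_sub; last exact: wv_ge0.
apply/subsetP => k; rewrite !inE setIT; apply: contra => /eqP e.
by apply/eqP/setP => t; move/setP: e => /(_ t); rewrite !inE; case: (t \in x k) => //= <-.
Qed.

Lemma mc x : own x -> good x -> (forall i, v i <= cov x (S i)) -> is_MC_CWE S v x.
Proof.
move=> ho hg hcov; split; first by apply/allocP.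
exists (wv v); split; first by move=> k _; exact: wv_ge0.
split; last by [].
move=> i T hT.
have -> : utility S v x (wv v) i = 0.
  rewrite /utility; case: ifP => h //.
  by rewrite /sm_val (hg _ h) /= subrr.
rewrite subr_le0 /sm_val; case: ifP => hsub; last first.
  by apply: sumr_ge0 => k _; exact: wv_ge0.
apply: le_trans (hcov i) _; apply: sum_sub; last exact: wv_ge0.
apply/subsetP => k; rewrite inE => /meetP [t [ht1 ht2]].
have := subsetP hsub _ ht2; case/bigcupP => k' hk' ht'.
by rewrite (ho.1 _ _ _ ht1 ht').
Qed.

Lemma card_disj (O : {set 'I_n}) (T : {set 'I_m}) :
  (forall i j, i \in O -> j \in O -> i != j -> [disjoint S i & S j]) ->
  (\sum_(i in O) #|S i :&: T| <= #|T|)%N.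
Proof.
move=> hd.
have E i : #|S i :&: T| = (\sum_(t in T) (t \in S i))%N.
  rewrite -sum1_card big_mkcond /= [RHS]big_mkcond /=; apply: eq_bigr => t _.
  by rewrite inE; case: (t \in S i); case: (t \in T).
rewrite (eq_bigr _ (fun i _ => E i)) exchange_big /= -sum1_card leq_sum // => t ht.
case: (pickP [pred i | (i \in O) && (t \in S i)]) => [i0 /andP [hi0 ht0]| h0].
  rewrite (bigD1 i0) //= ht0 big1 // => j /andP [hj hne].
  apply/eqP; rewrite eqb0; apply/negP => htj.
  by move: (disjointFr (hd j i0 hj hi0 hne) htj); rewrite ht0.
rewrite big1 // => j hj; have := h0 j; rewrite /= hj /= => ->.
by [].
Qed.
Lemma phase1_inv x1 : phase1 S v x1 -> exists g : {ffun 'I_n -> {set 'I_m}},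
  [/\ own x1, good x1,
     (forall i, i \in Qset R S -> v i <= cov x1 (S i)),
     (forall j, g j != set0 -> [/\ g j = S j, j \in Qset R S & g j \subset x1 (Some j)]) &
     (forall i, i \in Qset R S -> exists j, g j != set0 /\ v i <= v j /\ S j :&: S i != set0)].
Proof.
case=> s [[hperm hsort]] /=.
have gi : ginv (greedy S s) (fun j => false || (j \in s)).
  apply: greedy_inv; [split => /= | by move=> j; rewrite ffunE eqxx | exact: hsort].
  - by move=> j; left; rewrite ffunE.
  - by move=> j j' _; rewrite ffunE disjoint_sym; apply/disjP => t; rewrite inE.
  - by apply/esym/setP => t; rewrite inE; apply/bigcupP => [[j _]]; rewrite ffunE inE.
  - by move=> j; rewrite ffunE eqxx.
  - by [].
have memQ j : (j \in s) = (j \in Qset R S) by rewrite (perm_mem hperm) mem_enum.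
case: gi => h1 h2 h3 h4 h5.
set A := (greedy S s).1 in h3 *; set g := (greedy S s).2 in h1 h2 h3 h4 h5 *.
move=> H.
have gA j t : t \in g j -> t \in A by move=> ht; rewrite h3; apply/bigcupP; exists j.
have gS j : g j != set0 -> g j = S j by case: (h1 j) => -> //; rewrite eqxx.
have W : (forall i, i \in Qset R S -> exists j, g j != set0 /\ v i <= v j /\ S j :&: S i != set0).
  by move=> i hi; apply: h5; rewrite memQ hi.
have sub1 : (forall j, g j \subset x1 (Some j)) -> own x1 -> good x1 ->
    exists g0 : {ffun 'I_n -> {set 'I_m}},
  [/\ own x1, good x1,
     (forall i, i \in Qset R S -> v i <= cov x1 (S i)),
     (forall j, g0 j != set0 -> [/\ g0 j = S j, j \in Qset R S & g0 j \subset x1 (Some j)]) &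
     (forall i, i \in Qset R S -> exists j, g0 j != set0 /\ v i <= v j /\ S j :&: S i != set0)].
  move=> hsub ho hg; exists g; split => //.
  - move=> i /W [j [hj [hvij hm]]]; apply: le_trans hvij _.
    apply: (cov_ge (k := Some j)); move: hm; apply: contra => /eqP e.
    apply/eqP/setP => t; move/setP: e => /(_ t); rewrite !inE => e.
    apply/negP => /andP [t1 t2]; move: e; rewrite t2 andbT.
    by rewrite (subsetP (hsub j)) // gS.
  - move=> j hj; split; [exact: gS | by rewrite -memQ; move: (h4 j hj) | exact: hsub].
case: ifP H => hex.
  case=> f [hf [hN hS1]]; apply: sub1.
  - by move=> j; rewrite hS1; exact: subsetUl.
  - split.
      move=> t [k|] [k'|]; rewrite ?hN ?inE //; rewrite !hS1 !inE.
      case/orP => [a|/andP [a1 /eqP a2]]; case/orP => [b|/andP [b1 /eqP b2]].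
      + case: (eqVneq k k') => [->//|ne].
        by move: (disjointFr (h2 _ _ ne) a); rewrite b.
      + by rewrite (gA _ _ a) in b1.
      + by rewrite (gA _ _ b) in a1.
      + by rewrite -a2 -b2.
    move=> t; case: (boolP (t \in A)) => ht.
      by move: ht; rewrite h3 => /bigcupP [j _ hj]; exists (Some j); rewrite hS1 inE hj.
    by exists (Some (f t)); rewrite hS1 !inE ht eqxx orbT.
  - move=> j; rewrite hS1 => /set0Pn [t]; rewrite !inE => /orP [a|/andP [a1 /eqP a2]].
      by rewrite (gS j) ?subsetUl //; apply/set0Pn; exists t.
    have := hf t a1; rewrite a2 => hj.
    by rewrite -(gS j hj) subsetUl.
case=> hN hS1.
have g0 j : g j = set0.
  by apply/eqP; apply: contraFT hex => hj; apply/existsP; exists j.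
have A0 : A = set0.
  by rewrite h3; apply/setP => t; rewrite inE; apply/bigcupP => [[j _]]; rewrite g0 inE.
apply: sub1.
- by move=> j; rewrite g0 sub0set.
- split.
    move=> t [k|] [k'|]; by rewrite ?hN ?hS1 ?g0 ?inE.
  by move=> t; exists None; rewrite hN A0 setC0 inE.
- by move=> j; rewrite hS1 g0 eqxx.
Qed.
Lemma part1 x : SM_run S v x -> is_MC_CWE S v x /\
  (forall y : alloc n m, is_alloc y -> SW S v y <= 2 * Num.sqrt (m%:R : R) * SW S v x).
Proof.
case=> x1 [hp1 [s [[hperm _] ->]]].
have [g [ho1 hg1 hc1 hgj hW]] := phase1_inv hp1.
have := fold_inv s ho1 hg1 hc1.
set xf := foldl _ _ _; case=> ho [hg [hcov hT]].
have hall i : v i <= cov xf (S i).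
  apply: hcov; case: (boolP (i \in Qset R S)) => //= hi.
  by rewrite (perm_mem hperm) mem_enum inE hi.
split; first exact: mc.
move=> y /allocP hy.
set sq := Num.sqrt (m%:R : R).
have SWx : SW S v xf = cov xf setT := SW_cov ho hg.
have W0 : 0 <= SW S v xf by rewrite SWx; apply: sumr_ge0 => k _; exact: wv_ge0.
have vW i : v i <= SW S v xf by rewrite SWx; exact: le_trans (hall i) (cov_le _ _).
case: (posnP m) => [m0|mpos].
  have no : 'I_n -> False.
    move=> i; have := hS i; apply/negP; rewrite negbK; apply/eqP/setP => t.
    by have := ltn_ord t; rewrite [X in (_ < X)%N]m0 ltn0.
  rewrite /SW big1 => [|i]; last by case: (no i).
  by rewrite mulr_ge0 // mulr_ge0 // sqrtr_ge0.
set O := [set i | S i \subset y (Some i)].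
set Q := Qset R S.
have SWy : SW S v y = \sum_(i in O) v i.
  by rewrite /SW [RHS]big_mkcond; apply: eq_bigr => i _; rewrite inE /sm_val.
have hd (O' : {set 'I_n}) : O' \subset O ->
    forall i j, i \in O' -> j \in O' -> i != j -> [disjoint S i & S j].
  move=> hO i j hi hj hne; move: (subsetP hO _ hi) (subsetP hO _ hj).
  rewrite !inE => hi' hj'; apply/disjP => t ti tj.
  have := hy.1 t (Some i) (Some j) (subsetP hi' _ ti) (subsetP hj' _ tj).
  by case=> e; rewrite e eqxx in hne.
have sq_pos : 0 < sq by rewrite sqrtr_gt0 ltr0n.
rewrite SWy (big_setID Q) /=.
have -> : 2 * sq * SW S v xf = sq * SW S v xf + sq * SW S v xf.
  by rewrite -mulrA mulr_natl mulr2n.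
apply: lerD.
  set G := [set j | g j != set0].
  have step1 : \sum_(i in O :&: Q) v i <=
      \sum_(i in O :&: Q) \sum_(j in G) (#|S i :&: S j|%:R * v j).
    apply: ler_sum => i; rewrite in_setI => /andP [_ hiQ].
    have [j [hj [hvij hm]]] := hW i hiQ.
    apply: le_trans hvij _; rewrite (bigD1 j) ?inE //=.
    have h1 : v j <= #|S i :&: S j|%:R * v j.
      rewrite -{1}(mul1r (v j)); apply: ler_wpM2r; first exact: ltW.
      by rewrite ler1n card_gt0 setIC.
    apply: le_trans h1 _; rewrite lerDl; apply: sumr_ge0 => k _.
    by apply: mulr_ge0; [exact: ler0n | exact: ltW].
  apply: le_trans step1 _; rewrite exchange_big /=.
  apply: (@le_trans _ _ (\sum_(j in G) sq * v j)).
    apply: ler_sum => j hj; rewrite -mulr_suml -natr_sum.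
    apply: ler_wpM2r; first exact: ltW.
    have hj' : g j != set0 by move: hj; rewrite inE.
    have [_ hjQ _] := hgj j hj'.
    apply: (@le_trans _ _ (#|S j|%:R)); last by move: hjQ; rewrite inE.
    rewrite ler_nat; apply: card_disj; apply: hd; exact: subsetIl.
  rewrite -mulr_sumr; apply: ler_wpM2l; first exact: sqrtr_ge0.
  apply: (@le_trans _ _ (SW S v x1)); last by rewrite SWx (SW_cov ho1 hg1).
  rewrite /SW [X in X <= _]big_mkcond /=; apply: ler_sum => j _; rewrite inE.
  case: ifP => hj.
    by have [e _ sub] := hgj j hj; rewrite /sm_val -e sub.
  by rewrite /sm_val; case: ifP => _ //; exact: ltW.
have hk : #|O :\: Q|%:R * sq <= m%:R.
  rewrite mulr_natl -sumr_const.
  apply: (@le_trans _ _ (\sum_(i in O :\: Q) (#|S i|%:R : R))).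
    apply: ler_sum => i; rewrite in_setD => /andP [hiQ _].
    by move: hiQ; rewrite inE -ltNge => /ltW.
  rewrite -natr_sum ler_nat.
  have := card_disj setT (hd _ (subsetDl O Q)); rewrite cardsT card_ord.
  by under eq_bigr => i _ do rewrite setIT.
have hk' : #|O :\: Q|%:R <= sq.
  by rewrite -(ler_pM2r sq_pos) -expr2 sqr_sqrtr ?ler0n.
apply: (@le_trans _ _ (\sum_(i in O :\: Q) SW S v xf)); first by apply: ler_sum => i _.
by rewrite sumr_const -mulr_natl; apply: ler_wpM2r.
Qed.

End P2.

Section Q.
Variables (R : realType) (n m : nat).

Definition qlist : seq ('I_n * {set 'I_m}) :=
  [seq (i, T) | i <- enum 'I_n, T <- [set: 'I_m] :: [seq [set~ j] | j <- enum 'I_m]].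

Fixpoint askall (qs : seq ('I_n * {set 'I_m})) (k : seq R -> qprog n m R (alloc n m)) :
   qprog n m R (alloc n m) :=
  match qs with
  | [::] => k [::]
  | q :: qs' => QAsk q.1 q.2 (fun r => askall qs' (fun rs => k (r :: rs)))
  end.

Lemma askallE (o : 'I_n -> {set 'I_m} -> R) qs k :
  qrun o (askall qs k) =
  ((qrun o (k [seq o q.1 q.2 | q <- qs])).1, (size qs + (qrun o (k [seq o q.1 q.2 | q <- qs])).2)%N).
Proof.
elim: qs k => [|q qs IH] k /=; first by case: (qrun o (k [::])).
by rewrite IH.
Qed.

Definition ans (rs : seq R) q := nth 0 rs (index q qlist).
Definition vh rs (i : 'I_n) := ans rs (i, [set: 'I_m]).
Definition Sh rs (i : 'I_n) := [set j | ans rs (i, [set~ j]) == 0].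

Definition ord_of (v : 'I_n -> R) (A : {set 'I_n}) := sort (fun a b => v b <= v a) (enum A).

Definition alg (S : 'I_n -> {set 'I_m}) (v : 'I_n -> R) : alloc n m :=
  let st := greedy S (ord_of v (Qset R S)) in
  let A := st.1 in let g := st.2 in
  let x1 : alloc n m :=
    if [exists j, g j != set0] then
      [ffun k => match k with
                 | None => set0
                 | Some j => g j :|: (if [pick j0 | g j0 != set0] is Some j0 then
                                       (if j0 == j then ~: A else set0) else set0)
                 end]
    else [ffun k => match k with None => ~: A | Some j => g j end] in
  foldl (phase2_step S v) x1 (ord_of v (~: Qset R S)).

Lemma ord_dec (v : 'I_n -> R) A : dec_order v A (ord_of v A).
Proof.
split; first by rewrite /ord_of perm_sort.
apply: sort_sorted => a b; exact: le_total.
Qed.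

Lemma alg_run S v : SM_run S v (alg S v).
Proof.
rewrite /alg.
set st := greedy S _; set A := st.1; set g := st.2.
set x1 := (if _ then _ else _ : alloc n m).
exists x1; split; last by exists (ord_of v (~: Qset R S)); split => //; exact: ord_dec.
exists (ord_of v (Qset R S)); split; first exact: ord_dec.
rewrite /= -/st -/A -/g /x1.
case: ifP => hex; rewrite hex.
  case: pickP => [j0 hj0|none]; last first.
    by case/existsP: hex => j; rewrite none.
  exists (fun _ => j0); split => //; split; first by rewrite ffunE.
  move=> j; rewrite ffunE; congr (_ :|: _); apply/setP => t; rewrite !inE.
  by case: (j0 == j); rewrite !inE ?andbT ?andbF.
by split => [|j]; rewrite ffunE.
Qed.

Lemma qlist_mem i T : (T = [set: 'I_m] \/ exists j, T = [set~ j]) -> (i, T) \in qlist.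
Proof.
move=> hT; apply: (allpairs_f (fun i T => (i, T))); first by rewrite mem_enum.
case: hT => [->|[j ->]]; first exact: mem_head.
by rewrite in_cons; apply/orP; right; apply: map_f; rewrite mem_enum.
Qed.

Lemma ansE (o : 'I_n -> {set 'I_m} -> R) q : q \in qlist ->
  ans [seq o q.1 q.2 | q <- qlist] q = o q.1 q.2.
Proof.
move=> hq; rewrite /ans (nth_map q); last by rewrite index_mem.
by rewrite nth_index.
Qed.

Lemma decode (S : 'I_n -> {set 'I_m}) (v : 'I_n -> R) : (forall i, 0 < v i) ->
  let rs := [seq sm_val S v q.1 q.2 | q <- qlist] in Sh rs = S /\ vh rs = v.
Proof.
move=> hv /=; split; apply: functional_extensionality => i.
  apply/setP => j; rewrite inE /Sh /ans.
  rewrite -/(ans _ _) ansE /=; last by apply: qlist_mem; right; exists j.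
  rewrite /sm_val subsetC sub1set inE.
  case: (boolP (j \in S i)) => hj /=; first by rewrite eqxx.
  by rewrite gt_eqF.
rewrite /vh ansE /=; last by apply: qlist_mem; left.
by rewrite /sm_val subsetT.
Qed.

Lemma size_qlist : size qlist = (n * m.+1)%N.
Proof. by rewrite size_allpairs size_enum_ord /= size_map size_enum_ord. Qed.

End Q.

Lemma arith (n m : nat) : (n * m.+1 <= 2 * (n + m) ^ 2)%N.
Proof.
case: n => [|n'] //.
rewrite mulnS.
have h1 : (n'.+1 <= (n'.+1 + m) ^ 2)%N.
  by rewrite expnS expn1; apply: leq_trans (leq_addr m _) _; rewrite leq_pmulr // addn_gt0.
have h2 : (n'.+1 * m <= (n'.+1 + m) ^ 2)%N.
  by rewrite expnS expn1 leq_mul // ?leq_addr ?leq_addl.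
by rewrite mul2n -addnn addnC leq_add.
Qed.

Lemma part2 (R : realType) : exists c k : nat, forall n m : nat,
    exists P : qprog n m R (alloc n m),
      forall (S : 'I_n -> {set 'I_m}) (v : 'I_n -> R),
        (forall i, 0 < v i) -> (forall i, S i != set0) ->
        SM_run S v (qrun (sm_val S v) P).1 /\
        ((qrun (sm_val S v) P).2 <= c * (n + m) ^ k)%N.
Proof.
exists 2%N, 2%N => n m.
exists (askall (@qlist n m) (fun rs => QRet (alg (@Sh R n m rs) (@vh R n m rs)))).
move=> S v hv hS; rewrite askallE /=.
have [-> ->] := decode S hv.
split; first exact: alg_run.
by rewrite addn0 size_qlist; exact: arith.
Qed.

Unset Implicit Arguments. Set Strict Implicit.

Theorem theorem4 (R : realType) :
  (exists C : R, 0 < C /\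
    forall (n m : nat) (S : 'I_n -> {set 'I_m}) (v : 'I_n -> R),
      (forall i, 0 < v i) -> (forall i, S i != set0) ->
      forall x : alloc n m, SM_run S v x ->
        is_MC_CWE S v x /\
        (forall y : alloc n m, is_alloc y ->
           SW S v y <= C * Num.sqrt (m%:R : R) * SW S v x))
  /\
  (exists c k : nat, forall n m : nat,
    exists P : qprog n m R (alloc n m),
      forall (S : 'I_n -> {set 'I_m}) (v : 'I_n -> R),
        (forall i, 0 < v i) -> (forall i, S i != set0) ->
        SM_run S v (qrun (sm_val S v) P).1 /\
        ((qrun (sm_val S v) P).2 <= c * (n + m) ^ k)%N).
Proof.
split; last exact: part2.
exists 2; split; first by rewrite ltr0n.
move=> n m S v hv hS x hx.
exact: (part1 hv hS hx).
Qed.
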